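(* There exists a constant $C>0$ such that for all $\beta\in\mathbb R$ and all $N\in\mathbb N$, $$\sup_{x\in\Lambda_N}\int_0^\infty\mathsf P^N\big(X^{N,x}_t\in\Lambda_N\big)\,dt\le C\max\{1,N^{\beta-1}\}.$$
   Context: Fix $\alpha,\alpha_L,\alpha_R>0$. Let $\Lambda_N=\{1,\dots,N-1\}$, $\widehat\Lambda_N=\{0,\dots,N\}$. For $\beta\in\mathbb R$, $\{X^{N,x}_t:t\ge0\}$ (law $\mathsf P^N$) is the continuous-time random walk on $\widehat\Lambda_N$ started at $x$ with generator $A^Nf(x)=\mathbf 1_{\{x\in\Lambda_N\}}N^2\sum_{y\in\Lambda_N,|y-x|=1}\alpha(f(y)-f(x))+\mathbf 1_{\{x=1\}}N^{2-\beta}\alpha_L(f(0)-f(1))+\mathbf 1_{\{x=N-1\}}N^{2-\beta}\alpha_R(f(N)-f(N-1))$, i.e. it jumps between nearest neighbours of $\Lambda_N$ at rate $N^2\alpha$, jumps from $1$ to $0$ at rate $N^{2-\beta}\alpha_L$ and from $N-1$ to $N$ at rate $N^{2-\beta}\alpha_R$, and is absorbed at $0$ and $N$. The constant $C$ may depend on $\alpha,\alpha_L,\alpha_R$ but not on $\beta$, $N$, $x$. *)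

(* Defs.v *)
From HB Require Import structures.
From mathcomp Require Import all_boot all_order all_algebra.
From mathcomp Require Import all_classical all_reals all_analysis.
Set Implicit Arguments. Unset Strict Implicit. Unset Printing Implicit Defensive.
Import Order.TTheory GRing.Theory Num.Theory numFieldNormedType.Exports.
Local Open Scope ring_scope.

(* Lambda_N = {1,...,N-1}; states of hat Lambda_N = {0,...,N} are 'I_N.+1 *)
Definition inLam (N x : nat) : bool := (0 < x < N)%N.

(* jump rate from x to y (x <> y) read off the generator A^N *)
Definition rate (R : realType) (alpha alphaL alphaR beta : R) (N x y : nat) : R :=
  (if [&& inLam N x, inLam N y & (y == x.+1) || (x == y.+1)]
   then (N%:R) ^+ 2 * alpha else 0)
  + (if [&& inLam N x, x == 1%N & y == 0%N]
     then (N%:R) `^ (2 - beta) * alphaL else 0)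
  + (if [&& inLam N x, x == N.-1 & y == N]
     then (N%:R) `^ (2 - beta) * alphaR else 0).

Definition gen (R : realType) (alpha alphaL alphaR beta : R) (N : nat)
  : 'M[R]_N.+1 :=
  \matrix_(i, j)
    if i == j then - \sum_(k < N.+1 | k != i) rate alpha alphaL alphaR beta N i k
    else rate alpha alphaL alphaR beta N i j.

(* transition probabilities P^N(X^{N,x}_t = y) = (exp (t A^N))_{x y},
   the matrix exponential defined entrywise by its power series *)
Definition ptrans (R : realType) (alpha alphaL alphaR beta : R) (N : nat)
  (t : R) (x y : 'I_N.+1) : R :=
  limn (series (fun k : nat =>
    t ^+ k / (k`!)%:R * (gen alpha alphaL alphaR beta N ^+ k) x y)).
Arguments gen [R] alpha alphaL alphaR beta N.
Arguments ptrans [R] alpha alphaL alphaR beta N t x y.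

(* Main.v *)
Require Import Defs.
From HB Require Import structures.
From mathcomp Require Import all_boot all_order all_algebra.
From mathcomp Require Import all_classical all_reals all_analysis.
From mathcomp Require Import ring lra zify.
Import Order.TTheory GRing.Theory Num.Theory numFieldNormedType.Exports.
Local Open Scope ring_scope.

Section ExpM.
Context {R : realType} {n : nat}.
Implicit Types (M : 'M[R]_n).

Definition exm M (t : R) : 'M[R]_n :=
  \matrix_(i, j) limn (series (fun k => t ^+ k / (k`!)%:R * (M ^+ k) i j)).

Definition cf M p (i j : 'I_n) : R^nat := fun k => (M ^+ (k + p)) i j / (k`!)%:R.

Definition mnorm M : R := \sum_i \sum_j `|M i j|.

Lemma mnorm_ge0 M : 0 <= mnorm M.
Proof. by apply: sumr_ge0 => i _; apply: sumr_ge0 => j _; exact: normr_ge0. Qed.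

Lemma col_le M j : \sum_l `|M l j| <= mnorm M.
Proof.
apply: ler_sum => l _.
rewrite (bigD1 j) //= lerDl; apply: sumr_ge0 => k _; exact: normr_ge0.
Qed.

Lemma entry_le M i j : `|M i j| <= mnorm M.
Proof.
apply: le_trans (col_le M j).
rewrite (bigD1 i) //= lerDl; apply: sumr_ge0 => k _; exact: normr_ge0.
Qed.

Lemma pow_bound M k i j : `|(M ^+ k) i j| <= mnorm M ^+ k.
Proof.
elim: k i j => [|k IH] i j.
  rewrite expr0 mxE; case: (i == j); rewrite ?normr1 ?normr0 //.
rewrite exprSr -mulmxE mxE.
apply: le_trans (ler_norm_sum _ _ _) _.
apply: le_trans (_ : \sum_l mnorm M ^+ k * `|M l j| <= _).
  apply: ler_sum => l _; rewrite normrM; apply: ler_wpM2r => //.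
rewrite -mulr_sumr exprSr; apply: ler_wpM2l; last exact: col_le.
exact: exprn_ge0 (mnorm_ge0 M).
Qed.

Lemma cvg_cf M p i j K : cvgn (pseries (cf M p i j) K).
Proof.
apply: normed_cvg.
apply: (@series_le_cvg _ _ (fun k => mnorm M ^+ p * exp_coeff (mnorm M * `|K|) k)).
- by move=> k; exact: normr_ge0.
- move=> k; rewrite /exp_coeff /=.
  by rewrite mulr_ge0 ?exprn_ge0 ?mnorm_ge0 // divr_ge0 // exprn_ge0 // mulr_ge0 // mnorm_ge0.
- move=> k; rewrite /cf /exp_coeff /= normrM normrM normfV normr_nat normrX.
  have H := pow_bound M (k + p) i j; rewrite [mnorm M ^+ _]exprD in H.
  have -> : mnorm M ^+ p * ((mnorm M * `|K|) ^+ k / (k`!)%:R)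
      = (mnorm M ^+ k * mnorm M ^+ p) * (`|K| ^+ k / (k`!)%:R).
    by rewrite exprMn; ring.
  have -> : `|(M ^+ (k + p)) i j| / (k`!)%:R * `|K| ^+ k
      = `|(M ^+ (k + p)) i j| * (`|K| ^+ k / (k`!)%:R) by ring.
  by apply: ler_wpM2r => //.
- rewrite (_ : (fun k => _) = (mnorm M ^+ p) *: exp_coeff (mnorm M * `|K|)).
    exact/is_cvg_seriesZ/is_cvg_series_exp_coeff.
  by apply/funext.
Qed.

Lemma pseries_exm M t i j : exm M t i j = limn (pseries (cf M 0 i j) t).
Proof.
rewrite mxE /pseries /cf; congr (limn (series _)); apply/funext => k.
by rewrite /= addn0; ring.
Qed.

Lemma pseries_diffs_cf M p i j : pseries_diffs (cf M p i j) = cf M p.+1 i j.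
Proof.
apply/funext => k; rewrite /pseries_diffs /cf addSnnS factS natrM.
have h1 : (k.+1)%:R != 0 :> R by rewrite pnatr_eq0.
have h2 : (k`!)%:R != 0 :> R by rewrite pnatr_eq0 -lt0n fact_gt0.
by field; rewrite h2 addrC natr1 h1.
Qed.

Lemma exm_is_derive M i j (t : R) :
  is_derive t (1:R) (fun s : R => exm M s i j) (limn (pseries (cf M 1 i j) t)).
Proof.
have -> : (fun s => exm M s i j) = (fun s => limn (pseries (cf M 0 i j) s)).
  by apply/funext => s; exact: pseries_exm.
rewrite -pseries_diffs_cf.
apply: (@pseries_snd_diffs _ _ (`|t| + 1)).
- exact: cvg_cf.
- rewrite pseries_diffs_cf; exact: cvg_cf.
- rewrite !pseries_diffs_cf; exact: cvg_cf.
- by rewrite [X in _ < X]ger0_norm ?ltrDl // addr_ge0.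
Qed.

Lemma cvg_exm M t i j :
  (series (fun k => t ^+ k / (k`!)%:R * (M ^+ k) i j) @ \oo --> exm M t i j)%classic.
Proof.
have := cvg_cf M 0 i j t; rewrite -pseries_exm.
rewrite (_ : pseries _ _ = series (fun k => t ^+ k / (k`!)%:R * (M ^+ k) i j)) //.
rewrite /pseries /cf; congr (series _); apply/funext => k.
by rewrite /= addn0; ring.
Qed.

Lemma dexm_r M t i j : limn (pseries (cf M 1 i j) t) = (exm M t *m M) i j.
Proof.
apply: (cvg_lim (@Rhausdorff R)); rewrite mxE.
have -> : pseries (cf M 1 i j) t = fun N => \sum_(l < n)
    (series (fun k => t ^+ k / (k`!)%:R * (M ^+ k) i l) N * M l j).
  apply/funext => N; rewrite /pseries /series /cf /=.
  transitivity (\sum_(l < n) \sum_(0 <= k < N)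
     t ^+ k / (k`!)%:R * (M ^+ k) i l * M l j); last first.
    by apply: eq_bigr => l _; rewrite big_distrl.
  rewrite exchange_big /=; apply: eq_bigr => k _.
  rewrite addn1 exprSr -mulmxE mxE !big_distrl /=.
  by apply: eq_bigr => l _; ring.
apply: cvg_big => // [|l _].
  exact: add_continuous.
apply: cvgMr_tmp; exact: cvg_exm.
Qed.

Lemma dexm_l M t i j : limn (pseries (cf M 1 i j) t) = (M *m exm M t) i j.
Proof.
apply: (cvg_lim (@Rhausdorff R)); rewrite mxE.
have -> : pseries (cf M 1 i j) t = fun N => \sum_(l < n)
    (M i l * series (fun k => t ^+ k / (k`!)%:R * (M ^+ k) l j) N).
  apply/funext => N; rewrite /pseries /series /cf /=.
  transitivity (\sum_(l < n) \sum_(0 <= k < N)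
     M i l * (t ^+ k / (k`!)%:R * (M ^+ k) l j)); last first.
    by apply: eq_bigr => l _; rewrite big_distrr.
  rewrite exchange_big /=; apply: eq_bigr => k _.
  rewrite addn1 exprS -mulmxE mxE !big_distrl /=.
  by apply: eq_bigr => l _; ring.
apply: cvg_big => // [|l _].
  exact: add_continuous.
apply: cvgMl_tmp; exact: cvg_exm.
Qed.

End ExpM.


Section MDeriv.
Context {R : realType} {n : nat}.
Implicit Types (M : 'M[R]_n).

Definition mderiv (F dF : R -> 'M[R]_n) :=
  forall (t : R) i j, is_derive t (1:R) (fun s : R => F s i j) (dF t i j).

Lemma mderiv_ext F dF dG : mderiv F dF -> (forall t, dF t = dG t) -> mderiv F dG.
Proof. by move=> h e t i j; rewrite -e. Qed.

Lemma mderiv_exm_r M : mderiv (exm M) (fun t => exm M t *m M).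
Proof. by move=> t i j; rewrite -dexm_r; exact: exm_is_derive. Qed.

Lemma mderiv_exm_l M : mderiv (exm M) (fun t => M *m exm M t).
Proof. by move=> t i j; rewrite -dexm_l; exact: exm_is_derive. Qed.

Lemma mderiv_mul F dF G dG : mderiv F dF -> mderiv G dG ->
  mderiv (fun s => F s *m G s) (fun s => dF s *m G s + F s *m dG s).
Proof.
move=> hF hG t i j.
have -> : (fun s => (F s *m G s) i j) =
    \sum_(l < n) (fun s => F s i l * G s l j).
  by apply/funext => s; rewrite fct_sumE mxE.
rewrite !mxE -big_split /=.
apply: is_derive_sum => l.
apply: is_derive_eq; first exact: (is_deriveM (hF t i l) (hG t l j)).
by rewrite /= /GRing.scale /=; ring.
Qed.

Lemma mderiv_scale (f df : R -> R) G dG :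
  (forall t : R, is_derive t (1:R) f (df t)) -> mderiv G dG ->
  mderiv (fun s => f s *: G s) (fun s => df s *: G s + f s *: dG s).
Proof.
move=> hf hG t i j.
have -> : (fun s => (f s *: G s) i j) = f * (fun s => G s i j).
  by apply/funext => s; rewrite mxE.
apply: is_derive_eq; first exact: (is_deriveM (hf t) (hG t i j)).
by rewrite !mxE /GRing.scale /=; ring.
Qed.

Lemma mderiv_cst F t : mderiv F (fun _ => 0) -> F t = F 0.
Proof.
move=> h; apply/matrixP => i j.
apply: (@is_derive_0_is_cst _ (fun s => F s i j)) => x.
by have := h x i j; rewrite mxE.
Qed.

Lemma exm0 M : exm M 0 = 1%:M.
Proof.
apply/matrixP => i j; rewrite mxE.
apply: lim_near_cst => //.
near=> m; rewrite -[m]prednK; last by near: m.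
rewrite /series /= big_nat_recl // expr0 expr0 fact0 invr1 mulr1 mul1r.
rewrite big1 ?addr0 // => k _.
by rewrite expr0n /= !mul0r.
Unshelve. all: by end_near. Qed.

Lemma mexp_ge0 M k : (forall i j, 0 <= M i j) -> forall i j, 0 <= (M ^+ k) i j.
Proof.
move=> hM; elim: k => [|k IH] i j.
  by rewrite expr0 mxE; case: (i == j).
rewrite exprSr -mulmxE mxE; apply: sumr_ge0 => l _; exact: mulr_ge0.
Qed.

Lemma exm_ge0_nonneg M t : 0 <= t -> (forall i j, 0 <= M i j) ->
  forall i j, 0 <= exm M t i j.
Proof.
move=> t0 hM i j; rewrite mxE.
apply: limr_ge; first by have := cvg_exm M t i j; move/cvgP.
near=> N; apply: sumr_ge0 => k _.
by rewrite mulr_ge0 ?divr_ge0 ?exprn_ge0 ?mexp_ge0.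
Unshelve. all: by end_near. Qed.

End MDeriv.
Arguments mderiv_ext {R n F dF} dG.
Arguments mderiv_mul {R n F dF G dG}.
Arguments mderiv_scale {R n f df G dG}.
Arguments mderiv_cst {R n F} t.


Section Pos.
Context {R : realType} {n : nat}.
Implicit Types (A : 'M[R]_n).

Lemma exm_ge0 A (t : R) : 0 <= t -> (forall i j, i != j -> 0 <= A i j) ->
  forall i j, 0 <= exm A t i j.
Proof.
move=> t0 hA.
set c := mnorm A.
set B := A + c%:M.
have hB : forall i j, 0 <= B i j.
  move=> i j; rewrite !mxE; case: eqVneq => [<-|ij].
    have := entry_le A i i; rewrite ler_norml => /andP[h1 h2].
    by rewrite /= mulr1n /c -lerBlDr sub0r.
  by rewrite /= mulr0n addr0 hA.
set Psi := exm (- A); set P := exm A; set Q := exm B.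
set X := fun s : R => expR (- c * s) *: Q s.
have d1 : mderiv (fun s => Psi s *m P s) (fun _ => 0).
  apply: mderiv_ext (mderiv_mul (mderiv_exm_r (- A)) (mderiv_exm_l A)) _ => s.
  by rewrite mulmxN mulNmx mulmxA addNr.
have e1 : Psi t *m P t = 1%:M.
  by rewrite (mderiv_cst t d1) /Psi /P !exm0 mul1mx.
have dX : mderiv X (fun s => A *m X s).
  apply: mderiv_ext.
    apply: (@mderiv_scale _ _ (fun s => expR (- c * s)) (fun s => expR (- c * s) * - c) _ _).
      move=> s.
      have gd : is_derive s (1:R) (fun s : R => - c * s) (- c).
        have -> : (fun s : R => - c * s) = (- c) \*: (@id R) by apply/funext.
        have := is_deriveZ (- c) (is_derive_id s (1:R)).
        by rewrite (_ : (- c)%:A = - c) // /GRing.scale /= mulr1.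
      exact: (is_derive1_comp (is_derive_expR (- c * s)) gd).
    exact: mderiv_exm_l.
  move=> s /=.
  rewrite /X /B mulmxDl mul_scalar_mx scalerDr -scalemxAr scalerA.
  by rewrite addrCA -scalerDl mulrN addNr scale0r addr0.
have d2 : mderiv (fun s => Psi s *m X s) (fun _ => 0).
  apply: mderiv_ext (mderiv_mul (mderiv_exm_r (- A)) dX) _ => s.
  by rewrite mulmxN mulNmx mulmxA addNr.
have e2 : Psi t *m X t = 1%:M.
  by rewrite (mderiv_cst t d2) /Psi /X /Q mulr0 expR0 scale1r !exm0 mul1mx.
have e3 : P t *m Psi t = 1%:M := mulmx1C e1.
have eX : X t = P t by rewrite -[X t]mul1mx -e3 -mulmxA e2 mulmx1.
move=> i j; rewrite -/P -eX /X mxE.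
apply: mulr_ge0; first exact: expR_ge0.
exact: exm_ge0_nonneg.
Qed.

End Pos.


Section Anal.
Context {R : realType}.

Lemma deriv_cont (f df : R -> R) :
  (forall t : R, is_derive t (1:R) f (df t)) -> continuous f.
Proof.
move=> h t; apply: differentiable_continuous; apply/derivable1_diffP.
have ht := h t; exact: ex_derive.
Qed.

Lemma integral_bound (f f2 g : R -> R) :
  (forall t : R, is_derive t (1:R) g (- f2 t)) ->
  continuous f -> continuous f2 ->
  (forall t, 0 <= t -> 0 <= f t) ->
  (forall t, 0 <= t -> f t <= f2 t) ->
  (forall t, 0 <= t -> 0 <= g t) ->
  (\int[@lebesgue_measure R]_(t in `[0%R, +oo[%classic) (f t)%:E <= (g 0)%:E)%E.
Proof.
move=> dg cf cf2 f0 ff2 g0.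
have f20 : forall t, 0 <= t -> 0 <= f2 t.
  by move=> t t0; apply: le_trans (f0 t t0) (ff2 t t0).
pose F := fun t => - g t.
have dF : forall t : R, is_derive t (1:R) F (f2 t).
  move=> t; have := is_deriveN (dg t); rewrite opprK; exact.
have cF : continuous F := deriv_cont _ _ dF.
have Fmono : forall x y, 0 <= x -> x <= y -> F x <= F y.
  move=> x y x0 xy; apply: (@ger0_derive1_ndecr _ F 0 y).
  - by move=> z _; have hz := dF z; exact: ex_derive.
  - move=> z; rewrite in_itv /= => /andP[z0 _].
    by have hz := dF z; rewrite derive1E derive_val; apply: f20; exact: ltW.
  - exact: continuous_subspaceT.
  - exact: x0.
  - exact: xy.
  - exact: lexx.
pose Fm := fun t => F (if 0 <= t then t else 0).
have ndFm : nondecreasing_fun Fm.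
  move=> x y xy; rewrite /Fm.
  case: (lerP 0 x) => hx; case: (lerP 0 y) => hy.
  - exact: Fmono.
  - lra.
  - by apply: Fmono.
  - by [].
have ubFm : has_ubound (range Fm).
  exists 0 => _ [t _ <-]; rewrite /Fm /F oppr_le0; apply: g0.
  by case: ifP => //.
have cvgFm := nondecreasing_cvgr ndFm ubFm.
set l := sup (range Fm) in cvgFm.
have cvgF : (F x @[x --> +oo] --> l)%classic.
  apply: cvg_trans cvgFm; apply: near_eq_cvg.
  have : \forall t \near +oo, 0 <= t :> R.
    by apply: nbhs_pinfty_ge; rewrite num_real.
  by apply: filterS => t t0; rewrite /Fm ifT.
have l0 : l <= 0.
  rewrite -(cvg_lim (@Rhausdorff R) cvgFm); apply: limr_le.
    exact: (cvgP _ cvgFm).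
  near=> t; rewrite /Fm /F oppr_le0; apply: g0.
  by case: ifP => //.
have H1 : (\int[@lebesgue_measure R]_(t in `[0%R, +oo[%classic) (f t)%:E <=
     \int[@lebesgue_measure R]_(t in `[0%R, +oo[%classic) (f2 t)%:E)%E.
  apply: ge0_le_integral.
  - exact: measurable_itv.
  - by move=> t; rewrite /= in_itv /= andbT => t0; rewrite lee_fin f0.
  - apply/measurable_realfun.measurable_EFinP; apply: (measurable_funS measurableT) => //.
    exact: measurable_realfun.continuous_measurable_fun.
  - apply/measurable_realfun.measurable_EFinP; apply: (measurable_funS measurableT) => //.
    exact: measurable_realfun.continuous_measurable_fun.
  - by move=> t; rewrite /= in_itv /= andbT => t0; rewrite lee_fin ff2.
apply: le_trans H1 _.
rewrite (@ge0_continuous_FTC2y _ f2 F 0 l).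
- by rewrite /F -EFinB lee_fin; lra.
- exact: f20.
- exact: continuous_subspaceT.
- exact: cvgF.
- by move=> x _; have hx := dF x; exact: ex_derive.
- exact: cvg_at_right_filter (cF 0).
- by move=> x _; have hx := dF x; rewrite derive1E derive_val.
Unshelve. all: by end_near. Qed.

End Anal.


Section Lin.
Context {R : realType} {n : nat}.
Lemma is_derive_lin (F dF : R -> 'M[R]_n) (w : 'I_n -> R) i :
  mderiv F dF -> forall t : R,
  is_derive t (1:R) (fun s => \sum_y F s i y * w y) (\sum_y dF t i y * w y).
Proof.
move=> hF t.
have -> : (fun s => \sum_y F s i y * w y) = \sum_y (fun s => F s i y * w y).
  by apply/funext => s; rewrite fct_sumE.
apply: is_derive_sum => y.
have -> : (fun s => F s i y * w y) = (w y) \*: (fun s => F s i y).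
  by apply/funext => s; rewrite /= /GRing.scale /= mulrC.
apply: is_derive_eq; first exact: (is_deriveZ (w y) (hF t i y)).
by rewrite /GRing.scale /= mulrC.
Qed.
End Lin.

Section Gen.
Context {R : realType} (alpha alphaL alphaR beta : R) (N : nat).
Context (ha : 0 < alpha) (haL : 0 < alphaL) (haR : 0 < alphaR).

Definition nn : R := N%:R.
Definition aa : R := nn ^+ 2 * alpha.
Definition bL : R := nn `^ (2 - beta) * alphaL.
Definition bR : R := nn `^ (2 - beta) * alphaR.
Definition ra (j : nat) : R := if inLam N j then aa else 0.

Lemma rate_split (z k : nat) : inLam N z ->
  rate alpha alphaL alphaR beta N z k =
    (if k == z.+1 then ra z.+1 else 0) + (if k == z.-1 then ra z.-1 else 0)
  + (if k == 0%N then (if z == 1%N then bL else 0) else 0)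
  + (if k == N then (if z == N.-1 then bR else 0) else 0).
Proof.
move=> hz; rewrite /rate hz /=.
have hz' := hz; rewrite /inLam in hz'.
congr (_ + _ + _).
- rewrite /ra /aa /nn.
  case: (eqVneq k z.+1) => [->|h1].
    have -> : (z.+1 == z.-1) = false by lia.
    by rewrite /= andbT addr0.
  case: (eqVneq k z.-1) => [->|h2].
    have -> : (z == z.-1.+1) = true by lia.
    by rewrite orbT andbT add0r.
  have -> : (z == k.+1) = false by lia.
  by rewrite /= andbF addr0.
- by rewrite /bL /nn; case: (k == 0%N); case: (z == 1%N); rewrite ?andbF ?andbT.
- by rewrite /bR /nn; case: (k == N); case: (z == N.-1); rewrite ?andbF ?andbT.
Qed.

Lemma gen_apply (z : 'I_N.+1) (w : nat -> R) :
  \sum_(k < N.+1) gen alpha alphaL alphaR beta N z k * w k =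
  \sum_(k < N.+1) rate alpha alphaL alphaR beta N z k * (w k - w z).
Proof.
rewrite (bigD1 z) //= [in RHS](bigD1 z) //= subrr mulr0 add0r mxE eqxx.
under eq_bigr => k hk do rewrite mxE eq_sym (negbTE hk).
under [in RHS]eq_bigr => k hk do rewrite mulrBr.
rewrite sumrB -big_distrl /= mulNr addrC.
by congr (_ - _); apply: eq_bigl => k.
Qed.

Lemma sum_delta (p : nat) (c : R) (d : nat -> R) : (p < N.+1)%N ->
  \sum_(k < N.+1) (if (k : nat) == p then c else 0) * d k = c * d p.
Proof.
move=> hp; rewrite (bigD1 (Ordinal hp)) //= eqxx big1 ?addr0 // => k hk.
rewrite ifF ?mul0r //; apply/negbTE; apply: contra hk => /eqP e.
by apply/eqP/val_inj.
Qed.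

Lemma rate_apply (z : 'I_N.+1) (w : nat -> R) : inLam N z ->
  \sum_(k < N.+1) rate alpha alphaL alphaR beta N z k * (w k - w z) =
    ra z.+1 * (w z.+1 - w z) + ra z.-1 * (w z.-1 - w z)
  + (if z == 1%N :> nat then bL else 0) * (w 0%N - w z)
  + (if z == N.-1 :> nat then bR else 0) * (w N - w z).
Proof.
move=> hz; have hz' := hz; rewrite /inLam in hz'.
under eq_bigr => k _ do rewrite rate_split // !mulrDl.
rewrite !big_split /=.
by rewrite !(sum_delta _ _ (fun k => w k - w z)) //; lia.
Qed.

Lemma gen_offdiag (i j : 'I_N.+1) : i != j -> 0 <= gen alpha alphaL alphaR beta N i j.
Proof.
move=> hij; rewrite mxE (negbTE hij) /rate.
have h1 : 0 <= (N%:R : R) ^+ 2 * alpha by rewrite mulr_ge0 // ?exprn_ge0 // ltW.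
have h2 : 0 <= (N%:R : R) `^ (2 - beta) * alphaL by rewrite mulr_ge0 // ?powR_ge0 // ltW.
have h3 : 0 <= (N%:R : R) `^ (2 - beta) * alphaR by rewrite mulr_ge0 // ?powR_ge0 // ltW.
by rewrite !addr_ge0 //; case: ifP.
Qed.

Lemma gen_out (z k : 'I_N.+1) : ~~ inLam N z -> gen alpha alphaL alphaR beta N z k = 0.
Proof.
move=> hz.
have r0 : forall k : nat, rate alpha alphaL alphaR beta N z k = 0.
  by move=> k'; rewrite /rate (negbTE hz) /= !addr0.
rewrite mxE; case: ifP => _; last exact: r0.
by rewrite big1 ?oppr0 // => k' _; exact: r0.
Qed.

End Gen.


Lemma Ls_f (N z : nat) : (0 < z < N)%N -> z = N.-1 -> inLam N z.+1 = false.
Proof. rewrite /inLam; lia. Qed.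
Lemma Ls_t (N z : nat) : (0 < z < N)%N -> z <> N.-1 -> inLam N z.+1 = true.
Proof. rewrite /inLam; lia. Qed.
Lemma Lp_f (N z : nat) : z = 1%N -> inLam N z.-1 = false.
Proof. rewrite /inLam; lia. Qed.
Lemma Lp_t (N z : nat) : (0 < z < N)%N -> z <> 1%N -> inLam N z.-1 = true.
Proof. rewrite /inLam; lia. Qed.

Section Gen2.
Context {R : realType} (alpha alphaL alphaR beta : R) (N : nat).
Context (ha : 0 < alpha) (haL : 0 < alphaL) (haR : 0 < alphaR) (hN : (1 < N)%N).

Local Notation nn := (@nn R N).
Local Notation aa := (aa alpha N).
Local Notation bL := (bL alphaL beta N).
Local Notation bR := (bR alphaR beta N).

Definition mm : R := (nn + 1) / 2 * (bL^-1 + bR^-1).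
Definition phi (u : R) : R := u * (nn - u) / (2 * aa) + mm.
Definition hv (k : nat) : R := if inLam N k then phi k%:R else 0.

Lemma nn_ge2 : 2 <= nn.
Proof. by rewrite /nn ler_nat. Qed.

Lemma aa_gt0 : 0 < aa.
Proof. by rewrite /aa mulr_gt0 // exprn_gt0 // (lt_le_trans _ nn_ge2). Qed.

Lemma bL_gt0 : 0 < bL.
Proof. by rewrite /bL mulr_gt0 // powR_gt0 // (lt_le_trans _ nn_ge2). Qed.

Lemma bR_gt0 : 0 < bR.
Proof. by rewrite /bR mulr_gt0 // powR_gt0 // (lt_le_trans _ nn_ge2). Qed.

Lemma mm_ge0 : 0 <= mm.
Proof.
rewrite /mm mulr_ge0 // ?divr_ge0 // ?addr_ge0 ?invr_ge0 ?ltW ?bL_gt0 ?bR_gt0 //.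
by apply: lt_le_trans nn_ge2.
Qed.

Lemma bLm : (nn + 1) / 2 <= bL * mm.
Proof.
have h1 := bL_gt0; have h2 := bR_gt0.
have -> : bL * mm = (nn + 1) / 2 + (nn + 1) / 2 * (bL / bR).
  by rewrite /mm; field; rewrite (lt0r_neq0 h1) (lt0r_neq0 h2).
rewrite lerDl mulr_ge0 // ?divr_ge0 ?ltW //.
by have := nn_ge2; lra.
Qed.

Lemma bRm : (nn + 1) / 2 <= bR * mm.
Proof.
have h1 := bL_gt0; have h2 := bR_gt0.
have -> : bR * mm = (nn + 1) / 2 + (nn + 1) / 2 * (bR / bL).
  by rewrite /mm; field; rewrite (lt0r_neq0 h1) (lt0r_neq0 h2).
rewrite lerDl mulr_ge0 // ?divr_ge0 ?ltW //.
by have := nn_ge2; lra.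
Qed.

Lemma phi_ge u : 0 <= u <= nn -> mm <= phi u.
Proof.
move=> /andP[u0 un]; rewrite /phi lerDr divr_ge0 ?mulr_ge0 ?subr_ge0 //.
by rewrite ltW // aa_gt0.
Qed.

Lemma E1 u : aa * (phi (u + 1) - phi u) = (nn - 2 * u - 1) / 2.
Proof. have h := aa_gt0; rewrite /phi; field; exact: lt0r_neq0. Qed.

Lemma E2 u : aa * (phi (u - 1) - phi u) = (2 * u - nn - 1) / 2.
Proof. have h := aa_gt0; rewrite /phi; field; exact: lt0r_neq0. Qed.

Lemma hv_ge0 k : 0 <= hv k.
Proof.
rewrite /hv; case: ifP => // /andP[_ hk].
apply: le_trans mm_ge0 (phi_ge _ _).
by rewrite ler0n /= /nn ler_nat ltnW.
Qed.

Lemma key (z : 'I_N.+1) : inLam N z ->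
  \sum_(k < N.+1) gen alpha alphaL alphaR beta N z k * hv k <= -1.
Proof.
move=> hz; have hz' := hz; rewrite /inLam in hz'.
rewrite gen_apply rate_apply //.
set Z : R := (z : nat)%:R.
have Zr : 0 <= Z <= nn by rewrite ler0n /= /nn ler_nat ltnW //; case/andP: hz'.
have phZ := phi_ge Z Zr.
have hbl := bLm; have hbr := bRm; have h2 := nn_ge2.
have hbl0 := bL_gt0; have hbr0 := bR_gt0.
have pL : (nn + 1) / 2 <= bL * phi Z.
  by apply: le_trans hbl _; rewrite ler_wpM2l // ltW.
have pR : (nn + 1) / 2 <= bR * phi Z.
  by apply: le_trans hbr _; rewrite ler_wpM2l // ltW.
have hvz : hv z = phi Z by rewrite /hv hz.
have hv0 : hv 0 = 0 by rewrite /hv /inLam.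
have hvN : hv N = 0 by rewrite /hv /inLam ltnn andbF.
have hZp : (z.+1)%:R = Z + 1 :> R by rewrite -natr1.
have zp : (z.-1).+1 = z by lia.
have hZm : (z.-1)%:R = Z - 1 :> R by rewrite /Z -[in RHS]zp -natr1 addrK.
rewrite hvz hv0 hvN /ra /hv hZp hZm.
case c1: ((z : nat) == 1%N); case c2: ((z : nat) == N.-1).
- move/eqP: c1 => e1; move/eqP: c2 => e2.
  rewrite (Ls_f _ _ hz' e2) (Lp_f N _ e1) !mul0r !add0r !mulrN.
  lra.
- move/eqP: c1 => e1.
  have n2 : (z : nat) <> N.-1 by move=> e; rewrite e eqxx in c2.
  rewrite (Ls_t _ _ hz' n2) (Lp_f N _ e1) !mul0r !addr0 !add0r !mulrN E1.
  have hZ : Z = 1 by rewrite /Z e1.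
  rewrite hZ in pL *; lra.
- move/eqP: c2 => e2.
  have n1 : (z : nat) <> 1%N by move=> e; rewrite e eqxx in c1.
  rewrite (Ls_f _ _ hz' e2) (Lp_t _ _ hz' n1) !mul0r !addr0 !add0r !mulrN E2.
  have hZ : Z + 1 = nn by rewrite /Z /nn natr1 e2 prednK // ltnW.
  lra.
- have n1 : (z : nat) <> 1%N by move=> e; rewrite e eqxx in c1.
  have n2 : (z : nat) <> N.-1 by move=> e; rewrite e eqxx in c2.
  rewrite (Ls_t _ _ hz' n2) (Lp_t _ _ hz' n1) !mul0r !addr0 E1 E2.
  lra.
Qed.

Lemma hv_bound (x : nat) : inLam N x ->
  hv x <= (alpha^-1 + alphaL^-1 + alphaR^-1) * Num.max 1 (nn `^ (beta - 1)).
Proof.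
move=> hx; rewrite /hv hx /phi.
have h2 := nn_ge2.
have nn0 : 0 < nn by apply: lt_le_trans h2.
set X : R := x%:R.
have Xr : 0 <= X <= nn by rewrite ler0n /= /nn ler_nat ltnW //; case/andP: hx.
set P := nn `^ (beta - 1).
set M := Num.max 1 P.
have M1 : 1 <= M by rewrite /M le_max lexx.
have MP : P <= M by rewrite /M le_max lexx orbT.
have P0 : 0 <= P by rewrite /P powR_ge0.
have T1 : X * (nn - X) / (2 * aa) <= alpha^-1.
  have haa := aa_gt0.
  rewrite ler_pdivrMr ?mulr_gt0 //.
  have -> : alpha^-1 * (2 * aa) = 2 * nn ^+ 2.
    by rewrite /aa; field; rewrite lt0r_neq0.
  case/andP: Xr => X0 Xn; nra.
set q := nn `^ (beta - 2).
have q0 : 0 <= q by rewrite /q powR_ge0.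
have Pq : P = q * nn.
  rewrite /P /q (_ : beta - 1 = (beta - 2) + 1); last by ring.
  by rewrite powRD ?(lt0r_neq0 nn0) ?implybT // powRr1 // ltW.
have bLi : bL^-1 = q * alphaL^-1.
  by rewrite /bL invfM -powRN opprB.
have bRi : bR^-1 = q * alphaR^-1.
  by rewrite /bR invfM -powRN opprB.
have T2 : mm <= P * (alphaL^-1 + alphaR^-1).
  rewrite /mm bLi bRi Pq -mulrDr mulrA ler_wpM2r //.
    by rewrite addr_ge0 // invr_ge0 ltW.
  rewrite mulrC ler_wpM2l //; lra.
have ai : 0 <= alpha^-1 by rewrite invr_ge0 ltW.
have s0 : 0 <= alphaL^-1 + alphaR^-1 by rewrite addr_ge0 // invr_ge0 ltW.
have U1 : alpha^-1 <= alpha^-1 * M by rewrite ler_peMr.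
have U2 : P * (alphaL^-1 + alphaR^-1) <= M * (alphaL^-1 + alphaR^-1).
  by rewrite ler_wpM2r.
have -> : (alpha^-1 + alphaL^-1 + alphaR^-1) * M =
   alpha^-1 * M + M * (alphaL^-1 + alphaR^-1) by ring.
lra.
Qed.

End Gen2.


Theorem lemmaB1 (R : realType) (alpha alphaL alphaR : R)
  (halpha : 0 < alpha) (halphaL : 0 < alphaL) (halphaR : 0 < alphaR) :
  exists C : R, 0 < C /\
    forall (beta : R) (N : nat) (x : 'I_N.+1), inLam N x ->
      (\int[@lebesgue_measure R]_(t in `[0%R, +oo[%classic)
          (\sum_(y < N.+1 | inLam N y) ptrans alpha alphaL alphaR beta N (t : R) x y)%:E
        <= (C * Num.max 1 ((N%:R) `^ (beta - 1)))%:E)%E.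
Proof.
exists (alpha^-1 + alphaL^-1 + alphaR^-1); split.
  by rewrite !addr_gt0 // invr_gt0.
move=> beta N x hx.
have hN : (1 < N)%N by move: hx; rewrite /inLam; lia.
set A := gen alpha alphaL alphaR beta N.
have offA : forall i j, i != j -> 0 <= A i j.
  exact: (gen_offdiag alpha alphaL alphaR beta N halpha halphaL halphaR).
set P := exm A.
have Pge0 : forall t, 0 <= t -> forall i j, 0 <= P t i j.
  by move=> t t0; exact: exm_ge0 t0 offA.
pose hw := fun y : 'I_N.+1 => hv alpha alphaL alphaR beta N y.
pose w1 := fun y : 'I_N.+1 => (inLam N y)%:R : R.
pose w2 := fun z : 'I_N.+1 => - \sum_(k < N.+1) A z k * hw k.
pose f := fun t => \sum_y P t x y * w1 y.
pose f2 := fun t => \sum_z P t x z * w2 z.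
pose g := fun t => \sum_y P t x y * hw y.
have Ef : forall t,
    \sum_(y < N.+1 | inLam N y) ptrans alpha alphaL alphaR beta N t x y = f t.
  move=> t; rewrite big_mkcond /=; apply: eq_bigr => y _.
  rewrite /P /exm mxE /ptrans /w1.
  by case: (inLam N y); rewrite ?mulr1 ?mulr0.
under eq_integral => t _ do rewrite Ef.
have dP := mderiv_exm_r A.
have dg : forall t : R, is_derive t (1:R) g (- f2 t).
  move=> t; apply: is_derive_eq; first exact: (is_derive_lin _ _ hw x dP t).
  rewrite /f2 /w2 -sumrN.
  under [RHS]eq_bigr do rewrite mulrN opprK big_distrr.
  transitivity (\sum_y \sum_z P t x z * A z y * hw y).
    by apply: eq_bigr => y _; rewrite mxE big_distrl.
  rewrite exchange_big /=; apply: eq_bigr => z _; apply: eq_bigr => y _.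
  by rewrite mulrA.
have cf : continuous f := deriv_cont _ _ (is_derive_lin _ _ w1 x dP).
have cf2 : continuous f2 := deriv_cont _ _ (is_derive_lin _ _ w2 x dP).
have f0 : forall t, 0 <= t -> 0 <= f t.
  by move=> t t0; apply: sumr_ge0 => y _; rewrite mulr_ge0 ?Pge0 // ler0n.
have w12 : forall z, w1 z <= w2 z.
  move=> z; rewrite /w1 /w2; case hz: (inLam N z).
    by rewrite lerNr; exact: (key alpha alphaL alphaR beta N halpha halphaL halphaR hN z hz).
  by rewrite big1 ?oppr0 // => k _; rewrite gen_out ?mul0r ?hz.
have ff2 : forall t, 0 <= t -> f t <= f2 t.
  move=> t t0; apply: ler_sum => z _; apply: ler_wpM2l; first exact: Pge0.
  exact: w12.
have g0 : forall t, 0 <= t -> 0 <= g t.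
  move=> t t0; apply: sumr_ge0 => y _; rewrite mulr_ge0 ?Pge0 //.
  exact: (hv_ge0 alpha alphaL alphaR beta N halpha halphaL halphaR hN).
apply: le_trans (integral_bound f f2 g dg cf cf2 f0 ff2 g0) _.
rewrite lee_fin /g /P exm0 (bigD1 x) //= big1 ?addr0; last first.
  by move=> y hy; rewrite mxE eq_sym (negbTE hy) mul0r.
rewrite mxE eqxx mul1r.
exact: (hv_bound alpha alphaL alphaR beta N halpha halphaL halphaR hN x hx).
Qed.
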